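(* Let $\mathcal{A}\subset\mathcal{P}[n]$, let $G$ be the induced subgraph of $Q_n$ on vertex set $\mathcal{A}$, and let $i\in\{1,\dots,n\}$. Suppose $G$ has average degree at least $d$ and any two vertices of $G$ are at Hamming distance less than $k$. Then the induced subgraph $G'$ of $Q_n$ on vertex set $C_i(\mathcal{A})$ also has average degree at least $d$ and any two of its vertices are at Hamming distance less than $k$.
   Context: Vertices of $Q_n$ are identified with subsets of $[n]=\{1,\dots,n\}$ (elements of the power set $\mathcal{P}[n]$); two sets are adjacent iff their symmetric difference has size one, and the Hamming distance of $A,B$ is $|A\triangle B|$. For $A\in\mathcal{P}[n]$, $C_i(A)=A\setminus\{i\}$ if $i\in A$ and $C_i(A)=A$ if $i\notin A$. For $\mathcal{A}\subset\mathcal{P}[n]$, the down-compression is $C_i(\mathcal{A})=\{C_i(A):A\in\mathcal{A}\}\cup\{A\in\mathcal{A}:C_i(A)\in\mathcal{A}\}$. Average degree is $2|E|/|V|$. *)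

(* Defs.v *)
From mathcomp Require Import all_boot all_order all_algebra.
Set Implicit Arguments. Unset Strict Implicit. Unset Printing Implicit Defensive.
Import Order.TTheory GRing.Theory Num.Theory.

(* Vertices of Q_n are subsets of [n], modelled as {set 'I_n}
   (element i : 'I_n stands for i+1 in {1,...,n}). *)

Definition symdiff (n : nat) (A B : {set 'I_n}) : {set 'I_n} := (A :\: B) :|: (B :\: A).
Definition hamming (n : nat) (A B : {set 'I_n}) : nat := #|symdiff A B|.

Definition adjQ (n : nat) (A B : {set 'I_n}) : bool := hamming A B == 1%N.

Definition induced_edges (n : nat) (F : {set {set 'I_n}}) : {set {set {set 'I_n}}} :=
  [set [set A; B] | A in F, B in F & adjQ A B].

(* average degree 2|E|/|V| (as a real number in R); 0 for the empty graph *)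
Definition avg_degree (R : realFieldType) (n : nat) (F : {set {set 'I_n}}) : R :=
  (2 * #|induced_edges F|)%:R / #|F|%:R.

Definition compress1 (n : nat) (i : 'I_n) (A : {set 'I_n}) : {set 'I_n} :=
  if i \in A then A :\ i else A.

Definition compress (n : nat) (i : 'I_n) (F : {set {set 'I_n}}) : {set {set 'I_n}} :=
  [set compress1 i A | A in F] :|: [set A in F | compress1 i A \in F].

(* Main.v *)
Require Import Defs.
From mathcomp Require Import all_boot all_order all_algebra.
Import Order.TTheory GRing.Theory Num.Theory.
Set Implicit Arguments. Unset Strict Implicit. Unset Printing Implicit Defensive.

Lemma c1E n (i : 'I_n) A : compress1 i A = A :\ i.
Proof.
rewrite /compress1; case: ifP => // /negbT Hi.
by apply/setP=> x; rewrite in_setD1; case: eqP => // ->; rewrite (negbTE Hi).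
Qed.

Lemma in_symdiff n (A B : {set 'I_n}) x : (x \in symdiff A B) = ((x \in A) != (x \in B)).
Proof. by rewrite /symdiff !inE; case: (x \in A); case: (x \in B). Qed.

Lemma hammingC n (A B : {set 'I_n}) : hamming A B = hamming B A.
Proof. by rewrite /hamming /symdiff setUC. Qed.

Lemma hamming_le n (i : 'I_n) (A B A' B' : {set 'I_n}) :
  (forall x, x != i -> (x \in A) = (x \in A') /\ (x \in B) = (x \in B')) ->
  ((i \in A) = (i \in B) \/ (i \in A') != (i \in B')) ->
  (hamming A B <= hamming A' B')%N.
Proof.
move=> H Hi; apply: subset_leq_card; apply/subsetP=> x.
rewrite !in_symdiff.
case: (eqVneq x i) => [->|xi].
  by case: Hi => [->|]; rewrite ?eqxx.
by case: (H x xi) => -> ->.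
Qed.

Lemma mem_compress n (i : 'I_n) (F : {set {set 'I_n}}) (X : {set 'I_n}) :
  X \in compress i F = (X \in [set compress1 i A | A in F]) || (X \in F) && (X :\ i \in F).
Proof. by rewrite /compress in_setU inE c1E. Qed.

Lemma kind n (i : 'I_n) (F : {set {set 'I_n}}) (X : {set 'I_n}) : X \in compress i F ->
  (X \in F /\ (i \in X -> X :\ i \in F)) \/ (X \notin F /\ i \notin X /\ i |: X \in F).
Proof.
rewrite mem_compress => /orP[/imsetP[A AF ->]|/andP[XF XiF]]; last by left.
rewrite c1E.
have niX : i \notin A :\ i by rewrite in_setD1 eqxx.
case: (boolP (A :\ i \in F)) => H.
  by left; split=> //; rewrite (negbTE niX).
right; split=> //; split=> //.
case: (boolP (i \in A)) => iA; first by rewrite setD1K.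
exfalso; move: H; suff -> : A :\ i = A by rewrite AF.
by apply/setP=> x; rewrite in_setD1; case: eqP => // ->; rewrite (negbTE iA).
Qed.

Lemma notC n (i : 'I_n) (F : {set {set 'I_n}}) (X : {set 'I_n}) : X \in F -> X \notin compress i F ->
  X :\ i \notin F /\ i \in X.
Proof.
move=> XF; rewrite mem_compress XF /= negb_or => /andP[_ H]; split=> //.
case: (boolP (i \in X)) => // iX; exfalso; move: H; suff -> : X :\ i = X by rewrite XF.
by apply/setP=> x; rewrite in_setD1; case: eqP => // ->; rewrite (negbTE iX).
Qed.

Lemma inC n (i : 'I_n) (F : {set {set 'I_n}}) (X : {set 'I_n}) : X \in F -> X :\ i \in compress i F.
Proof. by move=> XF; rewrite mem_compress; apply/orP; left; apply/imsetP; exists X; rewrite ?c1E. Qed.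

Lemma card_compress n (i : 'I_n) (F : {set {set 'I_n}}) : #|compress i F| = #|F|.
Proof.
apply/eqP; rewrite eqn_leq; apply/andP; split.
  pose chi X := if X \in F then X else i |: X.
  have -> : #|compress i F| = #|[set chi X | X in compress i F]|.
    rewrite card_in_imset // => X Y XC YC; rewrite /chi.
    have := kind XC; have := kind YC.
    case: (boolP (X \in F)) => XF; case: (boolP (Y \in F)) => YF //.
    - move=> [[H _]|[_ [iY _]]]; first by [].
      move=> [[_ HX]|[H _]]; last by [].
      move=> E; exfalso; move/negP: YF; apply; rewrite -(setU1K iY) -E.
      by apply: HX; rewrite E setU11.
    - move=> [[_ HY]|[H _]]; last by [].
      move=> [[H _]|[_ [iX _]]]; first by [].
      move=> E; exfalso; move/negP: XF; apply; rewrite -(setU1K iX) E.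
      by apply: HY; rewrite -E setU11.
    - move=> [[H _]|[_ [iY _]]]; first by [].
      move=> [[H _]|[_ [iX _]]]; first by [].
      by move=> E; rewrite -(setU1K iX) E setU1K.
  apply: subset_leq_card; apply/subsetP=> Z /imsetP[X XC ->]; rewrite /chi.
  case: (kind XC) => [[XF _]|[XF [_ H]]]; first by rewrite XF.
  by rewrite (negbTE XF).
pose phi X := if X \in compress i F then X else X :\ i.
have -> : #|F| = #|[set phi X | X in F]|.
  rewrite card_in_imset // => X Y XF YF; rewrite /phi.
  case: (boolP (X \in compress i F)) => XC; case: (boolP (Y \in compress i F)) => YC //.
  - move=> E; have [H _] := notC YF YC; by move: H; rewrite -E XF.
  - move=> E; have [H _] := notC XF XC; by move: H; rewrite E YF.
  - have [_ iX] := notC XF XC; have [_ iY] := notC YF YC.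
    by move=> E; rewrite -(setD1K iX) E setD1K.
apply: subset_leq_card; apply/subsetP=> Z /imsetP[X XF ->]; rewrite /phi.
by case: ifP => // _; apply: inC.
Qed.

Lemma edge_i n (i : 'I_n) (F : {set {set 'I_n}}) (A B : {set 'I_n}) :
  A \in F -> B \in F -> adjQ A B -> A \notin compress i F -> (i \in A) && (i \in B).
Proof.
move=> AF BF adj AC; have [AiF iA] := notC AF AC; rewrite iA /=.
apply/negPn/negP => iB; move: AiF; apply/negP/negPn.
suff -> : A :\ i = B by [].
have iS : i \in symdiff A B by rewrite in_symdiff iA (negbTE iB).
move: adj; rewrite /adjQ /hamming => /cards1P[x Ex].
move: iS; rewrite Ex in_set1 => /eqP Hix.
apply/setP=> y; rewrite in_setD1; case: (eqVneq y i) => [->|yi]; first by rewrite (negbTE iB).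
have : y \notin symdiff A B by rewrite Ex in_set1 -Hix.
by rewrite in_symdiff negbK => /eqP.
Qed.

Lemma edge_mem n (F : {set {set 'I_n}}) e :
  e \in induced_edges F -> exists A B, [/\ A \in F, B \in F, adjQ A B & e = [set A; B]].
Proof.
by case/imset2P=> A B AF; rewrite inE => /andP[BF adj] ->; exists A, B.
Qed.

Lemma edge_sub n (F : {set {set 'I_n}}) e : e \in induced_edges F -> e \subset F.
Proof.
case/edge_mem=> A [B [AF BF _ ->]]; apply/subsetP=> x; rewrite !inE.
by case/orP=> /eqP ->.
Qed.

Lemma adjQC n (A B : {set 'I_n}) : adjQ A B = adjQ B A.
Proof. by rewrite /adjQ hammingC. Qed.

Lemma edge_allI n (i : 'I_n) (F : {set {set 'I_n}}) e :
  e \in induced_edges F -> ~~ (e \subset compress i F) -> forall X, X \in e -> i \in X.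
Proof.
case/edge_mem=> A [B [AF BF adj ->]].
rewrite subUset !sub1set negb_and => H X; rewrite !inE => /orP[]/eqP->.
  case/orP: H => H.
    by case/andP: (edge_i AF BF adj H).
  by rewrite adjQC in adj; case/andP: (edge_i BF AF adj H).
case/orP: H => H.
  by case/andP: (edge_i AF BF adj H).
by rewrite adjQC in adj; case/andP: (edge_i BF AF adj H).
Qed.

Lemma card_edges n (i : 'I_n) (F : {set {set 'I_n}}) :
  (#|induced_edges F| <= #|induced_edges (compress i F)|)%N.
Proof.
pose psi (e : {set {set 'I_n}}) :=
  if e \subset compress i F then e else [set X :\ i | X in e].
have -> : #|induced_edges F| = #|[set psi e | e in induced_edges F]|.
  rewrite card_in_imset // => e e' He He'; rewrite /psi.
  have nCF : forall e0, e0 \in induced_edges F -> ~~ (e0 \subset compress i F) ->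
      exists2 X, X \in e0 & X :\ i \notin F.
    move=> e0 He0 Hn; have [X Xe XnC] : exists2 X, X \in e0 & X \notin compress i F.
      by apply/exists_inP; move: Hn; apply: contraR => /exists_inPn H; apply/subsetP => x /H /negPn.
    exists X => //; have XF : X \in F by move/subsetP: (edge_sub He0); apply.
    by case: (notC XF XnC).
  case: ifP => H1; case: ifP => H2 //.
  - move=> E; have [X Xe XnF] := nCF _ He' (negbT H2).
    move: XnF; have : X :\ i \in e by rewrite E; apply/imsetP; exists X.
    by move/subsetP: (edge_sub He) => S /S ->.
  - move=> E; have [X Xe XnF] := nCF _ He (negbT H1).
    move: XnF; have : X :\ i \in e' by rewrite -E; apply/imsetP; exists X.
    by move/subsetP: (edge_sub He') => S /S ->.
  - have I1 := edge_allI He (negbT H1); have I2 := edge_allI He' (negbT H2).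
    move=> E; apply/setP; apply/subset_eqP; apply/andP; split; apply/subsetP=> X Xe.
      have : X :\ i \in [set X :\ i | X in e'] by rewrite -E; apply/imsetP; exists X.
      case/imsetP=> Y Ye' EXY.
      by rewrite -(setD1K (I1 _ Xe)) EXY setD1K // I2.
    have : X :\ i \in [set X :\ i | X in e] by rewrite E; apply/imsetP; exists X.
    case/imsetP=> Y Ye EXY.
    by rewrite -(setD1K (I2 _ Xe)) EXY setD1K // I1.
apply: subset_leq_card; apply/subsetP=> f /imsetP[e He ->]; rewrite /psi.
case: ifP => H.
  have [A [B [AF BF adj Ee]]] := edge_mem He.
  move: H; rewrite Ee subUset !sub1set => /andP[AC BC].
  by apply/imset2P; exists A B => //; rewrite inE BC.
have [A [B [AF BF adj Ee]]] := edge_mem He.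
have I := edge_allI He (negbT H).
have iA : i \in A by apply: I; rewrite Ee !inE eqxx.
have iB : i \in B by apply: I; rewrite Ee !inE eqxx orbT.
rewrite Ee imsetU1 imset_set1.
apply/imset2P; exists (A :\ i) (B :\ i); rewrite ?inC // inE inC //=.
move: adj; rewrite /adjQ /hamming; congr (_ == _); apply: eq_card => x.
rewrite !in_symdiff !in_setD1; case: (eqVneq x i) => [->|] //=.
by rewrite iA iB.
Qed.

Lemma diam n (i : 'I_n) (F : {set {set 'I_n}}) (k : nat) :
  (forall A B, A \in F -> B \in F -> (hamming A B < k)%N) ->
  forall A B, A \in compress i F -> B \in compress i F -> (hamming A B < k)%N.
Proof.
move=> Hk.
have Hd : forall A B, A \in compress i F -> B \in F -> (i \in B -> B :\ i \in F) ->
    (hamming A B < k)%N.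
  move=> A B HAC BF HB; case: (kind HAC) => [[AF _]|[_ [iA AF]]]; first exact: Hk.
  case: (boolP (i \in B)) => iB.
    apply: leq_ltn_trans (Hk _ _ AF (HB iB)).
    apply: (hamming_le (i := i)).
      by move=> x xi; rewrite !inE (negbTE xi).
    by right; rewrite !inE eqxx.
  apply: leq_ltn_trans (Hk _ _ AF BF).
  apply: (hamming_le (i := i)).
    by move=> x xi; rewrite !inE (negbTE xi).
  by left; rewrite (negbTE iA) (negbTE iB).
move=> A B HAC HBC.
case: (kind HBC) => [[BF HB]|[_ [iB BF]]]; first exact: Hd.
case: (kind HAC) => [[AF HA]|[_ [iA AF]]].
  by rewrite hammingC; apply: Hd.
apply: leq_ltn_trans (Hk _ _ AF BF).
apply: (hamming_le (i := i)).
  by move=> x xi; rewrite !inE (negbTE xi).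
by left; rewrite (negbTE iA) (negbTE iB).
Qed.

Local Open Scope ring_scope.

Theorem lemma6 (R : realFieldType) (n : nat) (F : {set {set 'I_n}}) (i : 'I_n)
    (d : R) (k : nat) :
  d <= avg_degree R F ->
  (forall A B, A \in F -> B \in F -> (hamming A B < k)%N) ->
  d <= avg_degree R (compress i F) /\
  (forall A B, A \in compress i F -> B \in compress i F -> (hamming A B < k)%N).
Proof.
move=> Hd Hk; split; last exact: diam.
apply: (le_trans Hd); rewrite /avg_degree card_compress.
apply: ler_wpM2r; first by rewrite invr_ge0 ler0n.
by rewrite ler_nat leq_mul2l card_edges orbT.
Qed.
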